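(* Let $P$ be a priority forest on $[n]_0$ with $m$ edges, and let $I_P=[\hat0,P]$ be its principal ideal in $\Pi(n)$. Then $$\chi(I_P,q)=q^{m-\mathrm{sasc}(P)}(q-1)^{\mathrm{sasc}(P)}=q^{m-\mathrm{lucky}(\pi)}(q-1)^{\mathrm{lucky}(\pi)},$$ where $\pi$ is any $(m,n)$-parking function whose priority forest is $P$.
   Context: $[n]_0=\{0,\dots,n\}$, $[n]=\{1,\dots,n\}$. A priority forest on $[n]_0$ is a rooted forest with vertex set $[n]_0$ whose component trees $T_0,T_1,\dots$ are increasing (each non-root vertex has a larger label than its parent) and satisfy: for $j<k$ every label of $T_j$ is smaller than every label of $T_k$. $\Pi(n)$ is the poset of priority forests on $[n]_0$ ordered by inclusion of edge sets, together with an extra top element $\hat1$; $\hat0$ is the edgeless forest; the rank of a priority forest is its number of edges. For the interval $I_P=[\hat0,P]$ with $\rho(x)=|E(x)|$, its characteristic polynomial is $\chi(I_P,q)=\sum_{x\in I_P}\mu(\hat0,x)\,q^{\rho(P)-\rho(x)}$, where $\mu$ is the Möbius function. A small ascent of $P$ is a non-root vertex $i$ whose parent is $i-1$; $\mathrm{sasc}(P)$ is their number. An $(m,n)$-parking function is a map $\pi:[m]\to[n]$ such that when cars $1,\dots,m$ arrive in order to spots $1,\dots,n$ and car $i$ parks in the first empty spot $\ge\pi(i)$, all cars park. Its bird's eye permutation $\omega_\pi$ is the partial map sending each occupied spot to the car parked there. Its priority forest is the forest on $[n]_0$ in which an occupied spot $i$ is a non-root vertex with parent $\pi(\omega_\pi(i))-1$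 and an empty spot (and $0$) is a root; this is a priority forest with $m$ edges. A car is lucky if it parks at its preferred spot $\pi(i)$; $\mathrm{lucky}(\pi)$ is the number of lucky cars. *)

(* Defs.v *)
From HB Require Import structures.
From mathcomp Require Import all_boot all_order all_algebra.
Set Implicit Arguments. Unset Strict Implicit. Unset Printing Implicit Defensive.
Import GRing.Theory.

(* A (rooted) forest on the vertex set [n]_0 = {0,...,n} (= 'I_n.+1) is encoded
   by its parent map: [F i = Some j] means j is the parent of i (edge j--i),
   [F i = None] means i is a root. *)
Definition forest (n : nat) := {ffun 'I_n.+1 -> option 'I_n.+1}.

Section Forests.
Variable n : nat.
Implicit Types F G : forest n.

Definition root_step F (i : 'I_n.+1) : 'I_n.+1 :=
  if F i is Some j then j else i.
(* the root of the component tree containing i (depth is at most n in an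
   increasing forest on n+1 vertices) *)
Definition root_of F (i : 'I_n.+1) : 'I_n.+1 := iter n (root_step F) i.

(* priority forest: every component tree is increasing (parent label < child
   label), and the trees are "separated": the tree with the smaller root
   (= its minimum label) has all labels smaller than all labels of the other. *)
Definition priority_forest F : bool :=
  [forall i, forall j, (F i == Some j) ==> (j < i)] &&
  [forall i, forall k, (root_of F i < root_of F k) ==> (i < k)].

Definition rank F : nat := #|[pred i | F i != None]|.

Definition le_forest F G : bool :=
  [forall i, (F i != None) ==> (F i == G i)].

Definition forest0 : forest n := [ffun _ => None].

(* Fuel k >= rank x is used to make
   the recursion structural (strictly smaller forests have smaller rank). *)
Fixpoint mob_fuel (k : nat) (x : forest n) : int :=
  if x == forest0 then 1%R else
  match k with
  | 0 => 0%R
  | k'.+1 => (- \sum_(y : forest n | priority_forest y && le_forest y x && (y != x))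
                 mob_fuel k' y)%R
  end.
Definition mobius0 (x : forest n) : int := mob_fuel (rank x) x.

Definition char_poly_ideal (P : forest n) : {poly int} :=
  (\sum_(x : forest n | priority_forest x && le_forest x P)
      (mobius0 x)%:P * 'X^(rank P - rank x))%R.

Definition sasc (P : forest n) : nat :=
  #|[pred i : 'I_n.+1 | if P i is Some j then j.+1 == i else false]|.
End Forests.

(* A map pi : [m] -> [n] is given as the sequence [:: pi 1; ...; pi m]. *)

(* first empty spot >= p among spots p..n, given the occupied spots s;
   n.+1 signals failure *)
Definition first_free (n : nat) (s : seq nat) (p : nat) : nat :=
  nth n.+1 [seq x <- iota p (n.+1 - p) | x \notin s] 0.
Definition park_step (n : nat) (s : seq nat) (p : nat) : seq nat :=
  rcons s (first_free n s p).
(* i-th entry = spot where car i+1 parks *)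
Definition park_spots (n : nat) (pi : seq nat) : seq nat :=
  foldl (park_step n) [::] pi.

Definition parking_function (m n : nat) (pi : seq nat) : bool :=
  [&& size pi == m, all (fun p => 0 < p <= n) pi &
      all (fun x => x <= n) (park_spots n pi)].

Definition lucky (n : nat) (pi : seq nat) : nat :=
  \sum_(i < size pi) (nth 0 (park_spots n pi) i == nth 0 pi i).

(* priority forest of pi: occupied spot v (car omega(v) = index v spots)
   has parent pi(omega(v)) - 1; empty spots and 0 are roots *)
Definition pf_forest (n : nat) (pi : seq nat) : forest n :=
  [ffun v : 'I_n.+1 =>
     if (v : nat) \in park_spots n pi
     then Some (inord (nth 0 pi (index (v : nat) (park_spots n pi))).-1)
     else None].

(* Main.v *)
Require Import Defs.
From HB Require Import structures.
From mathcomp Require Import all_boot all_order all_algebra.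
From mathcomp Require Import zify.
Import GRing.Theory.
Set Implicit Arguments. Unset Strict Implicit.

Section S.
Variable n : nat.
Implicit Types F x y : forest n.

Definition small F := [forall i, if F i is Some j then j.+1 == i else true].
Definition ascs F : {set 'I_n.+1} := [set i | if F i is Some j then j.+1 == i else false].
Definition restr x (T : {set 'I_n.+1}) : forest n := [ffun i => if i \in T then x i else None].

Lemma small_prio F : small F -> priority_forest F.
Proof.
move=> /forallP sF; apply/andP; split.
  apply/forallP=> i; apply/forallP=> j; apply/implyP=> /eqP Fi.
  by move: (sF i); rewrite Fi => /eqP e; rewrite -e ltnSn.
have mono : forall v w : 'I_n.+1, v <= w -> root_step F v <= root_step F w.
  move=> v w vw; rewrite /root_step.
  case Fv: (F v) => [a|]; case Fw: (F w) => [b|].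
  - move: (sF v) (sF w); rewrite Fv Fw => /eqP e1 /eqP e2; lia.
  - move: (sF v); rewrite Fv => /eqP e1; lia.
  - move: (sF w); rewrite Fw => /eqP e2.
    case: (eqVneq v w) => [e|ne]; first by rewrite e Fw in Fv.
    have : (v : nat) != w by [].
    lia.
  - done.
have imono : forall t (v w : 'I_n.+1), v <= w ->
    iter t (root_step F) v <= iter t (root_step F) w.
  elim=> [|t IH] v w vw //=; exact: mono (IH _ _ vw).
apply/forallP=> i; apply/forallP=> k; apply/implyP.
apply: contraTT; rewrite -!leqNgt => ki; exact: imono.
Qed.

Lemma asc_exists x : priority_forest x -> x != forest0 n -> exists i, i \in ascs x.
Proof.
case/andP => /forallP inc /forallP sep nz.
have [i0 Hi0] : exists i0, x i0 != None.
  apply/existsP; apply: contraR nz => /existsPn H; apply/eqP/ffunP => i.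
  by rewrite ffunE; apply/eqP; move: (H i); rewrite negbK.
case: (@arg_minnP _ i0 (fun i => x i != None) val Hi0) => i Pi mini.
case xi : (x i) => [j|]; last by rewrite xi in Pi.
have ji : j < i by move: (inc i) => /forallP/(_ j)/implyP; apply; rewrite xi.
exists i; rewrite inE xi; apply/eqP.
case: (eqVneq (j.+1 : nat) i) => // ne.
have jn : j.+1 < i by lia.
have iln : (i : nat) < n.+1 by [].
pose v : 'I_n.+1 := inord j.+1.
have vE : (v : nat) = j.+1 by rewrite inordK //; lia.
have vE' : val v = j.+1 := vE.
have xv : x v = None.
  case E: (x v) => [a|] //; have := mini v; rewrite E vE' => /(_ isT) /=; lia.
have xj : x j = None.
  case E: (x j) => [a|] //; have := mini j; rewrite E => /(_ isT) /=; lia.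
have rv : root_of x v = v by rewrite /root_of iter_fix // /root_step xv.
have ri : root_of x i = j.
  have n0 : 0 < n by lia.
  rewrite /root_of -[X in iter X _ _](prednK n0) iterSr /root_step xi iter_fix //.
  by rewrite xj.
have := sep i => /forallP/(_ v)/implyP; rewrite ri rv vE => /(_ (ltnSn _)).
lia.
Qed.

Lemma rank0 x : rank x = 0 -> x = forest0 n.
Proof.
move/card0_eq=> H; apply/ffunP=> i; rewrite ffunE.
by move: (H i); rewrite !inE => /negbT; rewrite negbK => /eqP.
Qed.

Lemma rank_forest0 : rank (forest0 n) = 0.
Proof. by apply: eq_card0 => i; rewrite !inE ffunE. Qed.

Lemma small0 : small (forest0 n).
Proof. by apply/forallP=> i; rewrite ffunE. Qed.

Lemma le_refl x : le_forest x x.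
Proof. by apply/forallP=> i; rewrite eqxx implybT. Qed.

Lemma rank_lt y x : le_forest y x -> y != x -> rank y < rank x.
Proof.
move=> /forallP le ne; apply: proper_card; rewrite properE; apply/andP; split.
  apply/subsetP => i; rewrite !inE => yi.
  by move: (le i); rewrite yi => /eqP <-.
have [i yxi] : exists i, y i != x i.
  apply/existsP; apply: contraR ne => /existsPn H; apply/eqP/ffunP => i.
  by move: (H i); rewrite negbK => /eqP.
apply/subsetPn; exists i; rewrite !inE.
  case E: (x i) => //; move: (le i) yxi; rewrite E.
  by case: (y i).
case E: (y i) => [a|] //; move: (le i) yxi; rewrite E /= => /eqP ->.
by rewrite eqxx.
Qed.

Lemma restr_small x (T : {set 'I_n.+1}) : T \subset ascs x -> small (restr x T).
Proof.
move=> /subsetP sT; apply/forallP=> i; rewrite ffunE.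
case: ifP => // /sT; rewrite inE; by case: (x i).
Qed.

Lemma restr_le x (T : {set 'I_n.+1}) : le_forest (restr x T) x.
Proof. by apply/forallP=> i; rewrite ffunE; case: ifP => _; rewrite ?eqxx ?implybT. Qed.

Lemma restr_supp x (T : {set 'I_n.+1}) i : T \subset ascs x -> (restr x T i != None) = (i \in T).
Proof.
move=> /subsetP sT; rewrite ffunE; case: ifP => // /sT; rewrite inE.
by case: (x i).
Qed.

Lemma rank_restr x (T : {set 'I_n.+1}) : T \subset ascs x -> rank (restr x T) = #|T|.
Proof. move=> sT; apply: eq_card => i; by rewrite inE restr_supp. Qed.

Lemma sum_restr (R : nmodType) (G : nat -> R) x :
  (\sum_(y | small y && le_forest y x) G (rank y) =
   \sum_(T : {set 'I_n.+1} | T \subset ascs x) G #|T|)%R.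
Proof.
transitivity (\sum_(T in powerset (ascs x)) G (rank (restr x T)))%R; last first.
  by apply: eq_big => T; rewrite ?powersetE // => sT; rewrite rank_restr.
rewrite -(big_imset (fun y => G (rank y)) (h := restr x) (A := powerset (ascs x))) /=; last first.
  move=> T1 T2; rewrite !powersetE => s1 s2 e; apply/setP => i.
  by rewrite -(restr_supp i s1) -(restr_supp i s2) e.
apply: eq_bigl => y; apply/andP/imsetP.
  case=> /forallP sy /forallP ly.
  exists [set i | y i != None].
    rewrite powersetE; apply/subsetP => i; rewrite !inE.
    move: (sy i) (ly i); case E: (y i) => [a|] //= sa /eqP <-.
    by move=> _.

  apply/ffunP => i; rewrite ffunE inE.
  move: (ly i); case E: (y i) => [a|] //= /eqP <- //.
case=> T; rewrite powersetE => sT ->; split; [exact: restr_small | exact: restr_le].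
Qed.
End S.

Lemma park_rcons n pi p : park_spots n (rcons pi p) =
  rcons (park_spots n pi) (first_free n (park_spots n pi) p).
Proof. by rewrite /park_spots foldl_rcons. Qed.

Lemma size_park n pi : size (park_spots n pi) = size pi.
Proof. elim/last_ind: pi => [|pi p IH] //; by rewrite park_rcons !size_rcons IH. Qed.

Lemma first_free_notin n s p : first_free n s p <= n -> first_free n s p \notin s.
Proof.
rewrite /first_free.
case E: [seq x <- iota p (n.+1 - p) | x \notin s] => [|a l] /=; first by rewrite ltnn.
move=> _; have : a \in a :: l by rewrite mem_head.
by rewrite -E mem_filter => /andP[].
Qed.

Lemma uniq_park n pi : all (fun x => x <= n) (park_spots n pi) -> uniq (park_spots n pi).
Proof.
elim/last_ind: pi => [|pi p IH] //.
rewrite park_rcons all_rcons rcons_uniq => /andP[h1 h2].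
by rewrite first_free_notin // IH.
Qed.

Lemma sum_count (r : seq nat) (b : pred nat) : \sum_(i <- r) (b i : nat) = count b r.
Proof. elim: r => [|x r IH]; by rewrite ?big_nil // big_cons IH. Qed.

Lemma lucky_sasc m n pi : parking_function m n pi -> lucky n pi = sasc (pf_forest n pi).
Proof.
case/and3P => _ pin0 spn0; have pin := allP pin0; have spn := allP spn0.
set s := park_spots n pi.
have us : uniq s := uniq_park spn0.
have ss : size s = size pi := size_park n pi.
pose g := fun v : nat => nth 0 pi (index v s) == v.
pose Q := fun v : nat => (v \in s) && g v.
have -> : sasc (pf_forest n pi) = #|[pred i : 'I_n.+1 | Q i]|.
  apply: eq_card => i; rewrite !inE ffunE -/s /Q /g.
  case: ifP => // ins /=.
  set c := nth 0 pi (index (i : nat) s).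
  have cin : c \in pi by apply: mem_nth; rewrite -ss index_mem.
  have /andP[c0 cn] := pin c cin.
  rewrite inordK; last by lia.
  by rewrite prednK.
rewrite cardE size_filter -enumT (eq_count (a2 := preim val Q)) //.
rewrite -count_map val_enum_ord.
have pe : perm_eq s (filter (mem s) (iota 0 n.+1)).
  apply: uniq_perm => //; first exact: filter_uniq (iota_uniq _ _).
  move=> v; rewrite mem_filter mem_iota; apply/idP/andP => [vs|[]//]; split => //.
  have := spn v vs; lia.
rewrite (eq_count (a2 := predI g (mem s))); last by move=> v; rewrite /Q /= andbC.
rewrite -count_filter -(permP pe).
rewrite -[X in count _ X](mkseq_nth 0 s) /mkseq count_map.
rewrite /lucky -/s -(big_mkord xpredT (fun i => (nth 0 s i == nth 0 pi i) : nat)).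
rewrite /index_iota subn0 sum_count ss.
apply: eq_in_count => i; rewrite mem_iota => /andP[_ ilt] /=.
by rewrite /g index_uniq ?ss // eq_sym.
Qed.

Open Scope ring_scope.
Lemma subset_sum (R : comNzRingType) (I : finType) (S : {set I}) (a : R) :
  \sum_(T : {set I} | T \subset S) (-1)^+#|T| * a^+(#|S| - #|T|)%N = (a - 1)^+#|S|.
Proof.
pose F i : R := if i \in S then -1 else 0.
pose G i : R := if i \in S then a else 1.
have H := @bigA_distr R 0 1 *%R +%R I F G.
have -> : (a - 1)^+#|S| = \prod_i (F i + G i).
  rewrite -prodr_const big_mkcond; apply: eq_bigr => i _.
  by rewrite /F /G; case: ifP => _; [rewrite addrC | rewrite add0r].
rewrite H big_mkcond /=; apply: eq_bigr => J _.
case: ifP => sJ.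
  rewrite (bigID (mem J)) /=.
  rewrite (eq_bigr (fun _ => -1)); last first.
    by move=> i iJ; rewrite iJ /F (subsetP sJ _ iJ).
  rewrite prodr_const; congr (_ * _).
  rewrite (eq_bigr G); last by move=> i /negbTE ->.
  rewrite (bigID (mem S)) /= [X in _ * X]big1 ?mulr1; last first.
    by move=> i /andP[_ /negbTE]; rewrite /G => ->.
  rewrite (eq_bigr (fun _ => a)); last by move=> i /andP[_ iS]; rewrite /G iS.
  rewrite (eq_bigl (mem (S :\: J))); last by move=> i; rewrite !inE andbC.
  by rewrite prodr_const cardsD (setIidPr sJ).
case/subsetPn: (negbT sJ) => i iJ niS.
by rewrite (bigD1 i) //= iJ /F (negbTE niS) mul0r.
Qed.

Section M.
Variable n : nat.

Lemma mobE k (x : forest n) : priority_forest x -> (rank x <= k)%N ->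
  mob_fuel k x = if small x then (-1)^+(rank x) else 0.
Proof.
elim: k x => [|k IH] x px rk.
  rewrite (rank0 (_ : rank x = 0%N)); last by lia.
  by rewrite /= eqxx small0 rank_forest0 expr0.
case: (eqVneq x (forest0 n)) => [->|nz]; first by rewrite /= eqxx small0 rank_forest0 expr0.
rewrite /= (negbTE nz).
rewrite (eq_bigr (fun y => if small y then (-1)^+rank y else 0)); last first.
  move=> y /andP[/andP[py ly] ny]; apply: IH => //; have := rank_lt ly ny; lia.
rewrite -big_mkcondr.
rewrite (eq_bigl (fun y => small y && le_forest y x && (y != x))); last first.
  move=> y; case sy: (small y); [by rewrite (small_prio sy) andbT | by rewrite andbF].
have S0 : \sum_(y | small y && le_forest y x) (-1)^+(rank y) = 0 :> int.
  rewrite (sum_restr (fun k => (-1)^+k : int)).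
  have := subset_sum (ascs x) (1 : int); rewrite subrr expr0n.
  have [i ia] := asc_exists px nz.
  have : (#|ascs x| == 0)%N = false by apply/negbTE; rewrite -lt0n card_gt0; apply/set0Pn; exists i.
  move=> ->; rewrite /= => H; rewrite -[RHS]H; apply: eq_bigr => T _; by rewrite expr1n mulr1.
case sx: (small x).
  rewrite (bigD1 x) /= in S0; last by rewrite sx le_refl.
  by move/eqP: S0; rewrite addrC addr_eq0 => /eqP ->; rewrite opprK.
rewrite (eq_bigl (fun y => small y && le_forest y x)) ?S0 ?oppr0 //.
move=> y; case: (eqVneq y x) => [->|_]; by rewrite ?sx ?andbT.
Qed.

Lemma charE (P : forest n) m : rank P = m ->
  char_poly_ideal P = 'X^(m - sasc P) * ('X - 1)^+sasc P.
Proof.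
move=> rP; rewrite /char_poly_ideal.
rewrite (eq_bigr (fun x => if small x then (-1)^+(rank x) * 'X^(rank P - rank x) else 0)); last first.
  move=> x /andP[px _]; rewrite /mobius0 (mobE px (leqnn _)); case: (small x); last by rewrite mul0r.
  by rewrite rmorphXn /= rmorphN1.
rewrite -big_mkcondr.
rewrite (eq_bigl (fun y => small y && le_forest y P)); last first.
  by move=> y; case sy: (small y); [rewrite (small_prio sy) andbT | rewrite andbF].
rewrite (sum_restr (fun k => (-1)^+k * 'X^(rank P - k))).
have sasE : sasc P = #|ascs P| by apply: eq_card => i; rewrite !inE.
have sm : (#|ascs P| <= m)%N.
  rewrite -rP; apply: subset_leq_card; apply/subsetP => i; rewrite !inE; by case: (P i).
rewrite sasE -subset_sum mulr_sumr; apply: eq_bigr => T sT.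
have tS := subset_leq_card sT.
rewrite mulrCA -exprD rP; congr (_ * 'X^_); lia.
Qed.
End M.

Unset Implicit Arguments.
Theorem theorem5p15 (n m : nat) (P : forest n) :
  priority_forest P -> rank P = m ->
  char_poly_ideal P = ('X^(m - sasc P) * ('X - 1) ^+ sasc P)%R /\
  (forall pi : seq nat, parking_function m n pi -> pf_forest n pi = P ->
     char_poly_ideal P = ('X^(m - lucky n pi) * ('X - 1) ^+ lucky n pi)%R).
Proof.
move=> _ rP; split; first exact: charE.
move=> pi pf e; rewrite (lucky_sasc pf) e; exact: charE.
Qed.
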